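(* Let $\mathsf{S}$ be a random sprinkle in $d$-dimensional Minkowski spacetime, i.e. the set of points of a Poisson point process with intensity $\rho\cdot\nu$ ($\rho>0$ a constant, $\nu$ the Lebesgue volume measure), equipped with the causal order restricted from Minkowski spacetime. Then, with probability $1$, $\mathsf{S}$ is total locally unsymmetric.
   Context: Minkowski spacetime $\mathbb{M}^d$ is $\mathbb{R}^{d}=\mathbb{R}^{1,d-1}$ with metric $\mathrm{diag}(1,-1,\dots,-1)$, partially ordered by $x\le y$ iff $y-x$ is zero or a future-directed causal vector. For the Poisson process, the number of points in a bounded region $U$ is Poisson distributed with mean $\rho\,\nu(U)$, independently for disjoint regions. Local (un)symmetry: $\ell(X)$ is the cardinality of a longest chain of a poset $X$. A subset $A$ of a poset $X$ is maximally ordered in $X$ if $|\{(a,b)\in A\times A:a<b\}|$ is maximal among subsets of $X$ of cardinality $|A|$. For $\sigma\in\mathrm{Aut}(P)$, $\Sigma(\sigma)=\{a:\sigma(a)\ne a\}$. For a finite poset $Q$ and $r\ge2$: $\sigma$ is a $(Q,r)$-generator if there exist subsets $S_0,\dots,S_{r-1}\subset\Sigma(\sigma)$, each isomorphic to $Q$, which are smallest maximally ordered subsets of $\Sigma(\sigma)$ with $\sigma(S_i)=S_{(i+1)\bmod r}$, $\ell(S_i)=\ell(\Sigma(\sigma))$, $\bigcup_iS_i=\Sigma(\sigma)$; distinct $S_i,S_j$ are $(Q,r)$-symmetric subsets. Elements $a,b$ are $(Q,r,0)$-symmetric if $a=b$; $(Q,r,1)$-symmetric if there are $(Q,r)$-symmetric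 subsets $A,B$ with generator $\sigma$, $a\in A$, $b=\sigma^q(a)\in B$, $1\le q<r$; for $m\ge2$, $(Q,r,m)$-symmetric if not $(Q,r,j)$-symmetric for $j<m$ but there exist $c$, $j<m$ with $a$ $(Q,r,j)$-symmetric to $c$ and $c$ $(Q,r,m-j)$-symmetric to $b$; $(Q,r)$-symmetric if $(Q,r,m)$-symmetric for some $m\ge0$ (an equivalence relation). $P\oslash_rQ$ is the quotient poset of equivalence classes with $E\le F$ iff some $e\in E$, $f\in F$ satisfy $e\le f$. $P$ is locally symmetric if $P\oslash_rQ\not\cong P$ for some finite $Q$ and $r\ge2$, locally unsymmetric otherwise. For $k\in\mathbb{N}_0$, a poset $P$ is $k$-stable locally unsymmetric if for every subset $S\subseteq P$ with $|S|\le k$ the poset $P\setminus S$ (with induced order) is locally unsymmetric. $P$ is total locally unsymmetric if it is $k$-stable locally unsymmetric for every finite $k<|P|$. *)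

(* Defs.v *)
From HB Require Import structures.
From mathcomp Require Import all_boot all_order all_algebra.
From mathcomp Require Import finmap.
From mathcomp Require Import all_classical all_reals all_analysis.
Set Implicit Arguments. Unset Strict Implicit. Unset Printing Implicit Defensive.
Import Order.TTheory GRing.Theory Num.Theory.
Local Open Scope classical_set_scope.
Local Open Scope ring_scope.

(* Posets presented as a carrier set X : set T with an order le on T   *)
(* (induced order).                                                    *)
Section PosetNotions.
Variables (T : choiceType) (le : T -> T -> Prop).

Definition plt (a b : T) : Prop := le a b /\ a <> b.

Definition card (A : set T) : nat := (#|` fset_set A|)%fset.

Definition is_chain (X C : set T) : Prop :=
  C `<=` X /\ forall a b, C a -> C b -> le a b \/ le b a.

Definition ell (X : set T) (n : nat) : Prop :=
  (exists C, [/\ is_chain X C, finite_set C & card C = n]) /\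
  (forall C, is_chain X C -> finite_set C -> (card C <= n)%N).

Definition nrel (A : set T) : nat :=
  (#|` fset_set [set p : T * T | [/\ A p.1, A p.2 & plt p.1 p.2]]|)%fset.

Definition maxord (X A : set T) : Prop :=
  [/\ A `<=` X, finite_set A &
   forall B, B `<=` X -> finite_set B -> card B = card A -> (nrel B <= nrel A)%N].

Definition automorphism (P : set T) (s : T -> T) : Prop :=
  [/\ forall a, P a -> P (s a),
      forall a b, P a -> P b -> s a = s b -> a = b,
      forall b, P b -> exists2 a, P a & s a = b &
      forall a b, P a -> P b -> (le a b <-> le (s a) (s b))].

Definition moved (P : set T) (s : T -> T) : set T := [set a | P a /\ s a <> a].

End PosetNotions.

Definition poset_iso (T U : Type) (leX : T -> T -> Prop) (X : set T)
    (leY : U -> U -> Prop) (Y : set U) : Prop :=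
  exists f : T -> U,
    [/\ forall a, X a -> Y (f a),
        forall a b, X a -> X b -> f a = f b -> a = b,
        forall y, Y y -> exists2 a, X a & f a = y &
        forall a b, X a -> X b -> (leX a b <-> leY (f a) (f b))].

(* finite posets Q are given on 'I_n by a boolean relation *)
Definition fin_partial_order (n : nat) (q : rel 'I_n) : Prop :=
  [/\ forall i, q i i,
      forall i j, q i j -> q j i -> i = j &
      forall i j k, q i j -> q j k -> q i k].

Section LocalSymmetry.
Variables (T : choiceType) (le : T -> T -> Prop) (P : set T).
Variables (n : nat) (q : rel 'I_n) (r : nat).

Definition generator (s : T -> T) (S : nat -> set T) : Prop :=
  let Sig := moved P s in
  [/\ automorphism le P s,
      (forall i, (i < r)%N ->
        [/\ S i `<=` Sig,
            poset_iso le (S i) (fun a b => q a b) [set: 'I_n],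
            maxord le Sig (S i),
            (forall S', maxord le Sig S' ->
               (exists l, ell le S' l /\ ell le Sig l) ->
               (card (S i) <= card S')%N) &
            s @` S i = S (i.+1 %% r)%N /\
            exists l, ell le (S i) l /\ ell le Sig l]) &
      Sig = \bigcup_(i in [set i : nat | (i < r)%N]) S i].

Definition sym1 (a b : T) : Prop :=
  exists (s : T -> T) (S : nat -> set T) (i j q0 : nat),
    [/\ generator s S, (i < r)%N, (j < r)%N, S i <> S j &
        [/\ S i a, (1 <= q0 < r)%N, b = iter q0 s a & S j b]].

(* symlev N m a b, for m <= N, is (Q,r,m)-symmetry *)
Fixpoint symlev (N : nat) : nat -> T -> T -> Prop :=
  match N with
  | 0 => fun _ a b => a = b
  | N'.+1 => fun m a b =>
      if (m <= N')%N then symlev N' m a b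
      else if m == 1%N then sym1 a b
      else (forall j, (j < m)%N -> ~ symlev N' j a b) /\
           exists c j, [/\ (1 <= j)%N, (j < m)%N,
                          symlev N' j a c & symlev N' (m - j) c b]
  end.

Definition symQ (a b : T) : Prop := exists m, symlev m m a b.

Definition quot_carrier : set (set T) :=
  [set E | exists2 a, P a & E = [set b | P b /\ symQ a b]].

Definition quot_le (E F : set T) : Prop :=
  exists e f, [/\ E e, F f & le e f].

End LocalSymmetry.

Definition locally_symmetric (T : choiceType) (le : T -> T -> Prop) (P : set T) :=
  exists (n : nat) (q : rel 'I_n) (r : nat),
    [/\ fin_partial_order q, (2 <= r)%N &
        ~ poset_iso le P (@quot_le T le) (quot_carrier le P q r)].

Definition locally_unsymmetric (T : choiceType) (le : T -> T -> Prop) (P : set T) :=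
  ~ locally_symmetric le P.

Definition k_stable_lu (T : choiceType) (le : T -> T -> Prop) (k : nat) (P : set T) :=
  forall S, S `<=` P -> finite_set S -> (card S <= k)%N ->
    locally_unsymmetric le (P `\` S).

Definition total_lu (T : choiceType) (le : T -> T -> Prop) (P : set T) :=
  forall k : nat, (infinite_set P \/ (k < card P)%N) -> k_stable_lu le k P.

(* Minkowski spacetime M^n = R^{1,n-1}, points are row vectors 'rV_n, *)
(* coordinate 0 is time.                                              *)
Definition causal_le (R : realType) (d : nat) (x y : 'rV[R]_d.+1) : Prop :=
  let v := y - x in
  0 <= v 0 0 /\ \sum_(i < d) (v 0 (lift ord0 i)) ^+ 2 <= (v 0 0) ^+ 2.

(* 'rV_n with its (arbitrary) base point 0, needed for the generated
   sigma-algebra construction *)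
Definition prV (R : realType) (n : nat) : Type := 'rV[R]_n.
HB.instance Definition _ (R : realType) (n : nat) := Choice.on (prV R n).
HB.instance Definition _ (R : realType) (n : nat) :=
  isPointed.Build (prV R n) (0 : 'rV[R]_n).

Section Sprinkle.
Variables (R : realType) (n : nat).

Definition box_set (a b : 'rV[R]_n) : set 'rV[R]_n :=
  [set x | forall i, a 0 i < x 0 i < b 0 i].

Definition boxes : set (set (prV R n)) := [set B | exists a b, B = box_set a b].

(* R^n with its Borel sigma-algebra (generated by open boxes) *)
Local Notation Rn := (g_sigma_algebraType boxes).

(* nu is the Lebesgue volume measure: it gives boxes their volume
   (this determines it uniquely on Borel sets) *)
Definition is_lebesgue (nu : {measure set Rn -> \bar R}) : Prop :=
  forall a b, nu (box_set a b) = (\prod_(i < n) Num.max 0 (b 0 i - a 0 i))%:E.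

Definition bounded_set (U : set 'rV[R]_n) : Prop :=
  exists M : R, forall x, U x -> forall i, `|x 0 i| <= M.

Definition poisson_prob (mu : R) (k : nat) : R :=
  mu ^+ k / (k`!)%:R * expR (- mu).

Definition count_event (Om : Type) (S : Om -> set 'rV[R]_n) (U : set 'rV[R]_n)
    (k : nat) : set Om :=
  [set w | finite_set (S w `&` U) /\ card (S w `&` U) = k].

(* S is (the set of points of) a Poisson point process of intensity rho * nu:
   for pairwise disjoint bounded Borel sets U_1..U_m, the counts are
   independent and Poisson with means rho * nu(U_i) *)
Definition poisson_point_process (dO : measure_display) (Om : measurableType dO)
    (Pr : probability Om R) (nu : {measure set Rn -> \bar R}) (rho : R)
    (S : Om -> set 'rV[R]_n) : Prop :=
  forall (m : nat) (U : 'I_m -> set Rn) (k : 'I_m -> nat),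
    (forall i, measurable (U i) /\ bounded_set (U i)) ->
    (forall i j, i != j -> U i `&` U j = set0) ->
    let E := [set w | forall i, count_event S (U i) (k i) w] in
    measurable E /\
    Pr E = (\prod_(i < m) poisson_prob (rho * fine (nu (U i))) (k i))%:E.

End Sprinkle.

Notation Rn R n := (g_sigma_algebraType (@boxes R n)).

(* Main.v *)
Require Import Defs.
From HB Require Import structures.
From mathcomp Require Import all_boot all_order all_algebra finmap.
From mathcomp Require Import all_classical all_reals all_analysis.
From mathcomp Require Import ring lra.
Import Order.TTheory GRing.Theory Num.Theory.
Local Open Scope classical_set_scope.
Local Open Scope ring_scope.
Set Implicit Arguments. Unset Strict Implicit. Unset Printing Implicit Defensive.
Section Comb.
Variables (T : choiceType) (le : T -> T -> Prop).

Definition finaut_trivial (P : set T) := forall s, automorphism le P s ->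
  finite_set (moved P s) -> forall a, ~ moved P s a.

Lemma iso_finite (U : finType) (leX : T -> T -> Prop) (X : set T) (leY : U -> U -> Prop) :
  poset_iso leX X leY [set: U] -> finite_set X.
Proof.
move=> [f [fX finj fsurj _]].
have [g Hg] : {g : U -> T & forall y, X (g y) /\ f (g y) = y}.
  apply: (@choice _ _ (fun y a => X a /\ f a = y)) => y.
  by have [a Xa fa] := fsurj y I; exists a.
apply: (@sub_finite_set _ _ (g @` [set: U])); last exact/finite_image/finite_finset.
move=> a Xa; exists (f a) => //; have [? ?] := Hg (f a); exact: finj.
Qed.

Lemma symlev_eq (P : set T) n (q : rel 'I_n) r :
  (forall a b, ~ sym1 le P q r a b) ->
  forall N m a b, symlev le P q r N m a b -> a = b.
Proof.
move=> Hs; elim=> [|N IH] m a b //=.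
case: ifP => _; first exact: IH.
case: ifP => _; first by move/Hs.
by move=> [_ [c [j [_ _ H1 H2]]]]; rewrite (IH _ _ _ H1) (IH _ _ _ H2).
Qed.

Lemma lu_of (P : set T) : finaut_trivial P -> locally_unsymmetric le P.
Proof.
move=> Hf [n [q [r [_ _ Hn]]]]; apply: Hn.
have Hs : forall a b, ~ sym1 le P q r a b.
  move=> a b [s [S' [i [j [q0 [[Ha HS HU] ir _ _ [Sa _ _ _]]]]]]].
  have [Si _ _ _ _] := HS i ir.
  apply: (Hf s Ha _ a (Si a Sa)).
  rewrite HU; apply: bigcup_finite; first exact: finite_II.
  by move=> k /HS [_ Hiso _ _ _]; exact: iso_finite Hiso.
have HQ : forall a b, symQ le P q r a b -> a = b.
  by move=> a b [m]; exact: symlev_eq.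
exists (fun a => [set b | P b /\ symQ le P q r a b]); split.
- by move=> a Pa; exists a.
- move=> a b Pa Pb E.
  have : [set c | P c /\ symQ le P q r b c] a by rewrite -E; split => //; exists 0%N.
  by move=> [_ /HQ ->].
- by move=> E [a Pa ->]; exists a.
- move=> a b Pa Pb; split.
  + move=> lab; exists a, b; split => //; split => //; exists 0%N => //.
  + by move=> [e [f [[_ /HQ <-] [_ /HQ <-] lef]]].
Qed.

Definition Dist (P : set T) := forall x y, x <> y -> forall F, finite_set F ->
  exists z, [/\ P z, ~ F z & ~ (le x z <-> le y z)].

Lemma finaut_of_Dist (P F0 : set T) : Dist P -> finite_set F0 ->
  finaut_trivial (P `\` F0).
Proof.
move=> HD fF0 s [Hm Hinj Hsurj Hle] fSig a [Pa sa].
have fU : finite_set (moved (P `\` F0) s `|` F0) by rewrite finite_setU.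
have [z [Pz Fz Hz]] := HD _ _ (nesym sa) _ fU.
have P'z : (P `\` F0) z by split => // F0z; apply: Fz; right.
have sz : s z = z.
  by apply: contrapT => nz; apply: Fz; left; split.
apply: Hz; rewrite -{2}sz; exact: Hle.
Qed.

Lemma total_lu_of (P : set T) : (forall F0, finite_set F0 -> finaut_trivial (P `\` F0)) ->
  total_lu le P.
Proof. by move=> H k _ F _ fF _; apply: lu_of; exact: H. Qed.

End Comb.
Lemma seq_min (R : realType) (T : eqType) (l : seq T) (g : T -> R) a0 :
  a0 \in l -> exists2 m, m \in l & forall b, b \in l -> g m <= g b.
Proof.
elim: l a0 => [//|x l IH] a0 _.
case: l IH => [|y l] IH.
  by exists x; rewrite ?mem_head // => b; rewrite inE => /eqP ->.
have [m ml Hm] := IH y (mem_head _ _).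
have [gxm|gmx] := leP (g x) (g m).
  exists x; first exact: mem_head.
  move=> b; rewrite in_cons => /orP [/eqP -> //|/Hm]; exact: le_trans.
exists m; first by rewrite in_cons ml orbT.
move=> b; rewrite in_cons => /orP [/eqP ->|/Hm //]; exact: ltW.
Qed.

Lemma finite_min (R : realType) (T : choiceType) (A : set T) (g : T -> R) a0 :
  finite_set A -> A a0 -> exists2 m, A m & forall b, A b -> g m <= g b.
Proof.
move=> fA Aa0.
have memA : forall x, (x \in (fset_set A : seq T)) = (x \in A).
  by move=> x; rewrite (in_fset_set fA).
have a0l : a0 \in (fset_set A : seq T) by rewrite memA inE.
have [m ml Hm] := @seq_min R _ (fset_set A : seq T) g a0 a0l.
exists m; first by move: ml; rewrite memA inE.
by move=> b Ab; apply: Hm; rewrite memA inE.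
Qed.

Lemma causal_le0 (R : realType) (x y : 'rV[R]_1) :
  causal_le x y <-> x 0 0 <= y 0 0.
Proof.
rewrite /causal_le big_ord0 !mxE subr_ge0; split => [[] //|->]; split => //.
exact: sqr_ge0.
Qed.

Lemma finaut_total (R : realType) (P : set 'rV[R]_1) :
  finaut_trivial (@causal_le R 0) P.
Proof.
move=> s [Hm Hinj Hsurj Hle] fSig a Siga.
have [m [Pm sm] Hmin] := finite_min (fun x : 'rV[R]_1 => x 0 0) fSig Siga.
have Psm := Hm _ Pm.
have Sigsm : moved P s (s m) by split => // E; apply: sm; apply: Hinj => //; exact: Hm.
have [m' Pm' sm'] := Hsurj _ Pm.
have Sigm' : moved P s m' by split => // E; apply: sm; rewrite -{1}sm' E -sm' E.
have l1 : causal_le m (s m) by apply/causal_le0; exact: Hmin.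
have l2 : causal_le (s m) m.
  rewrite -{2}sm'; apply/(Hle _ _ Pm Pm'); apply/causal_le0; exact: Hmin.
apply: sm; apply/rowP => i; rewrite (ord1 i).
move/causal_le0: l1; move/causal_le0: l2 => l2 l1; apply/eqP; rewrite eq_le l1 l2 //.
Qed.
Section Geom.
Variables (R : realType) (d' : nat).
Local Notation V := 'rV[R]_(d'.+2).

Definition lam (k : 'I_d'.+1) (e : R) (x : V) := x 0 0 - e * x 0 (lift ord0 k).

Definition bfun (k : 'I_d'.+1) (e t c0 c1 : R) (i : 'I_d'.+2) : R :=
  if i == ord0 then t + c0 else if i == lift ord0 k then e * t + c1 else c1.

Definition gbox (k : 'I_d'.+1) (e p h t : R) : set V :=
  box_set (\row_i bfun k e t (p + 4 * h - h) (- h) i)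
          (\row_i bfun k e t (p + 4 * h + h) h i).

Definition Cst (h M : R) := \sum_(i < d'.+1) (h + M) ^+ 2.

Lemma sq_le_bound (w c : R) : - c <= w <= c -> w ^+ 2 <= c ^+ 2.
Proof. move=> /andP [h1 h2]; nra. Qed.

Lemma geom (k : 'I_d'.+1) (e p h M t : R) (x y z : V) :
  (e = 1 \/ e = -1) -> 0 < h -> 0 <= M ->
  (forall i, `|x 0 i| <= M) -> (forall i, `|y 0 i| <= M) ->
  lam k e x < p -> p + 8 * h < lam k e y ->
  `|p + 4 * h| + h + M + Cst h M / h + 1 <= t ->
  gbox k e p h t z -> causal_le x z /\ ~ causal_le y z.
Proof.
move=> He h0 M0 Hx Hy lx ly Ht Hz.
have C0 : 0 <= Cst h M by apply: sumr_ge0 => i _; exact: sqr_ge0.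
have Ch : 0 <= Cst h M / h by apply: divr_ge0 => //; exact: ltW.
have /andP [z0a z0b] : p + 4 * h - h + t < z 0 0 < p + 4 * h + h + t.
  by move: (Hz ord0); rewrite !mxE /bfun eqxx => /andP [? ?]; apply/andP; split; lra.
have L0 : forall j, (lift ord0 j == ord0 :> 'I_d'.+2) = false.
  by move=> j; rewrite eq_sym (negbTE (neq_lift _ _)).
have /andP [zka zkb] : e * t - h < z 0 (lift ord0 k) < e * t + h.
  by move: (Hz (lift ord0 k)); rewrite !mxE /bfun L0 eqxx.
have Hzo : forall j, j != k -> - h < z 0 (lift ord0 j) < h.
  move=> j jk; move: (Hz (lift ord0 j)).
  by rewrite !mxE /bfun L0 (inj_eq (@lift_inj _ ord0)) (negbTE jk).
have bnd : forall (u : V), (forall i, `|u 0 i| <= M) -> forall i, - M <= u 0 i <= M.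
  by move=> u Hu i; rewrite -ler_norml.
have [x0a x0b] := andP (bnd _ Hx ord0).
have [xka xkb] := andP (bnd _ Hx (lift ord0 k)).
have [y0a y0b] := andP (bnd _ Hy ord0).
have [yka ykb] := andP (bnd _ Hy (lift ord0 k)).
have mabs := ler_norm (p + 4 * h); have mabs' := ler_norm (- (p + 4 * h)).
rewrite normrN in mabs'.
move: lx ly; rewrite /lam => lx ly.
have rest : forall (u : V), (forall i, `|u 0 i| <= M) ->
    \sum_(i < d'.+1) ((z - u) 0 (lift ord0 i)) ^+ 2 <=
    ((z - u) 0 (lift ord0 k)) ^+ 2 + Cst h M.
  move=> u Hu; rewrite /Cst [X in X <= _](bigD1 k) //= [X in _ <= _ + X](bigD1 k) //= lerD2l.
  rewrite -[leLHS]add0r; apply: lerD; first exact: sqr_ge0.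
  apply: ler_sum => j jk; apply: sq_le_bound; rewrite !mxE.
  have [a1 a2] := andP (Hzo j jk); have [b1 b2] := andP (bnd _ Hu (lift ord0 j)).
  apply/andP; split; lra.
have rest2 : forall (u : V),
    ((z - u) 0 (lift ord0 k)) ^+ 2 <= \sum_(i < d'.+1) ((z - u) 0 (lift ord0 i)) ^+ 2.
  move=> u; rewrite (bigD1 k) //= lerDl; apply: sumr_ge0 => i _; exact: sqr_ge0.
split.
- split; first by rewrite !mxE; lra.
  apply: (le_trans (rest _ Hx)); rewrite !mxE.
  set A := z 0 0 - x 0 0; set B := z 0 (lift ord0 k) - x 0 (lift ord0 k).
  have HL : 2 * h * (2 * Cst h M / h) <= (A - e * B) * (A + e * B).
    apply: ler_pM.
    + by apply: mulr_ge0; lra.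
    + by rewrite -mulrA; apply: mulr_ge0; [lra|exact: Ch].
    + by rewrite /A /B; case: He => He; subst e; lra.
    + rewrite /A /B -mulrA; move: Ch Ht; set c := Cst h M / h => Ch Ht; case: He => He; subst e; lra.
  have ee : e * e = 1 by case: He => He; subst e; rewrite ?mulr1 ?mulrNN ?mulr1.
  have E1 : (A - e * B) * (A + e * B) = A ^+ 2 - (e * e) * B ^+ 2 by ring.
  rewrite ee mul1r in E1.
  have E2 : 2 * h * (2 * Cst h M / h) = 4 * Cst h M.
    by field; apply/lt0r_neq0.
  rewrite E1 E2 in HL; lra.
- move=> [_ Hle]; move: (le_trans (rest2 y) Hle); rewrite !mxE.
  set A := z 0 0 - y 0 0; set B := z 0 (lift ord0 k) - y 0 (lift ord0 k).
  have HL : 0 < (- (A - e * B)) * (A + e * B).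
    apply: mulr_gt0.
    + by rewrite /A /B; case: He => He; subst e; lra.
    + by rewrite /A /B; case: He => He; subst e; lra.
  have ee : e * e = 1 by case: He => He; subst e; rewrite ?mulr1 ?mulrNN ?mulr1.
  have E1 : (- (A - e * B)) * (A + e * B) = (e * e) * B ^+ 2 - A ^+ 2 by ring.
  rewrite ee mul1r in E1.
  rewrite E1 in HL; lra.
Qed.
End Geom.
Section Cover.
Variables (R : realType) (d' : nat).
Local Notation V := 'rV[R]_(d'.+2).

Definition th_k (kk : nat) : 'I_d'.+1 := inord kk.
Definition th_e (bb : nat) : R := if odd bb then -1 else 1.
Definition th_p (a1 a2 nn : nat) : R := (a1%:R - a2%:R) / nn.+1%:R.
Definition th_h (nn : nat) : R := nn.+1%:R^-1 / 8.

Definition pre (k : 'I_d'.+1) (e p h M : R) (x y : V) :=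
  [/\ forall i, `|x 0 i| <= M, forall i, `|y 0 i| <= M,
      lam k e x < p & p + 8 * h < lam k e y].

Lemma int_nats (j : int) : exists a1 a2 : nat, (j%:~R : R) = a1%:R - a2%:R.
Proof.
case: j => n; first by exists n, 0%N; rewrite subr0.
by exists 0%N, n.+1; rewrite NegzE mulrNz sub0r.
Qed.

Lemma grid (u v : R) : u < v -> exists a1 a2 nn : nat,
  u < th_p a1 a2 nn /\ th_p a1 a2 nn + 8 * th_h nn < v.
Proof.
move=> uv.
pose nn := Num.bound (2 / (v - u)).
have vu : 0 < v - u by rewrite subr_gt0.
have Hn : 2 / (v - u) < nn%:R by apply: archi_boundP; apply: divr_ge0 => //; exact: ltW.
have Hn1 : 2 < (v - u) * nn.+1%:R.
  rewrite -ltr_pdivrMl // mulrC; apply: (lt_le_trans Hn).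
  by rewrite ler_nat.
pose w := u * nn.+1%:R.
have /andP [f1 f2] := floor_itv w.
have [a1 [a2 Ea]] := int_nats (Num.floor w + 1).
exists a1, a2, nn.
have n0 : 0 < nn.+1%:R :> R by rewrite ltr0n.
have E8 : 8 * th_h nn = nn.+1%:R^-1 by rewrite /th_h; field; exact: lt0r_neq0.
rewrite E8 /th_p -Ea.
rewrite rmorphD /= in f2 *; rewrite rmorph1 in f2 *.
split.
- by rewrite ltr_pdivlMr.
- rewrite -[X in _ + X]mul1r -mulrDl ltr_pdivrMr //.
  rewrite /w in f1 f2; lra.
Qed.

Lemma exists_diff (x y : V) : x <> y -> exists i, x 0 i <> y 0 i.
Proof.
move=> xy; apply: contrapT => H; apply: xy; apply/rowP => i.
by apply: contrapT => Hi; apply: H; exists i.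
Qed.

Lemma cover (x y : V) : x <> y -> exists kk bb a1 a2 nn MM : nat,
  let k := th_k kk in let e := th_e bb in let p := th_p a1 a2 nn in
  let h := th_h nn in let M := MM%:R in
  pre k e p h M x y \/ pre k e p h M y x.
Proof.
move=> /exists_diff [i Hi].
have [k Hk] : exists k : 'I_d'.+1,
    x 0 0 - y 0 0 <> 0 \/ x 0 (lift ord0 k) - y 0 (lift ord0 k) <> 0.
  move: Hi; case: (unliftP ord0 i) => [j ->|->] Hi.
  - by exists j; right; move/eqP; rewrite subr_eq0 => /eqP.
  - by exists ord0; left; move/eqP; rewrite subr_eq0 => /eqP.
have [bb Hb] : exists bb, lam k (th_e bb) x <> lam k (th_e bb) y.
  rewrite /lam /th_e.
  have [E|E] := eqVneq (x 0 0 - y 0 0) (x 0 (lift ord0 k) - y 0 (lift ord0 k)).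
  - exists 1%N => /= /eqP; rewrite -subr_eq0 => /eqP H.
    case: Hk => Hk; apply: Hk; lra.
  - exists 0%N => /= /eqP; rewrite -subr_eq0 => /eqP H.
    by move/eqP: E; apply; apply/eqP; lra.
pose MM := Num.bound (\sum_i (`|x 0 i| + `|y 0 i|)).
have HM : forall i, `|x 0 i| <= MM%:R /\ `|y 0 i| <= MM%:R.
  have S0 : 0 <= \sum_i (`|x 0 i| + `|y 0 i|) by apply: sumr_ge0 => *; exact: addr_ge0.
  have B := ltW (archi_boundP S0).
  move=> j; have : `|x 0 j| + `|y 0 j| <= \sum_i (`|x 0 i| + `|y 0 i|).
    rewrite (bigD1 j) //= lerDl; apply: sumr_ge0 => *; exact: addr_ge0.
  move: (normr_ge0 (x 0 j)) (normr_ge0 (y 0 j)) => ? ? ?; split; lra.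
have [lt|lt|E] := ltgtP (lam k (th_e bb) x) (lam k (th_e bb) y); last by exfalso; exact: Hb E.
- have [a1 [a2 [nn [g1 g2]]]] := grid lt.
  exists (val k), bb, a1, a2, nn, MM; left; rewrite /th_k inord_val.
  by split => // j; have [] := HM j.
- have [a1 [a2 [nn [g1 g2]]]] := grid lt.
  exists (val k), bb, a1, a2, nn, MM; right; rewrite /th_k inord_val.
  by split => // j; have [] := HM j.
Qed.
End Cover.
Section Boxes.
Variables (R : realType) (d' : nat).
Local Notation V := 'rV[R]_(d'.+2).

Definition th_t0 (a1 a2 nn MM : nat) : R :=
  `|th_p R a1 a2 nn + 4 * th_h R nn| + th_h R nn + MM%:R +
   Cst d' (th_h R nn) MM%:R / th_h R nn + 1.

Definition Bx (kk bb a1 a2 nn MM K : nat) : set V :=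
  gbox (th_k d' kk) (th_e R bb) (th_p R a1 a2 nn) (th_h R nn)
       (th_t0 a1 a2 nn MM + K%:R).

Lemma h_pos nn : 0 < th_h R nn.
Proof. by rewrite /th_h divr_gt0 // invr_gt0 ltr0n. Qed.

Lemma h_le nn : th_h R nn <= 1 / 8.
Proof.
rewrite /th_h ler_pM2r ?invr_gt0 ?ltr0n // invf_le1 ?ltr0n //.
by rewrite ler1n.
Qed.

Lemma Bx_time kk bb a1 a2 nn MM K z : Bx kk bb a1 a2 nn MM K z ->
  let t := th_t0 a1 a2 nn MM + K%:R in
  let m := th_p R a1 a2 nn + 4 * th_h R nn in
  t + (m - th_h R nn) < z 0 0 < t + (m + th_h R nn).
Proof. by move=> /(_ ord0); rewrite !mxE /bfun eqxx. Qed.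

Lemma Bx_disj kk bb a1 a2 nn MM K K' : K <> K' ->
  Bx kk bb a1 a2 nn MM K `&` Bx kk bb a1 a2 nn MM K' = set0.
Proof.
move=> KK; apply/seteqP; split => // z [/Bx_time /= /andP [a b] /Bx_time /= /andP [c e]].
have h1 := h_le nn; have h0 := h_pos nn.
have [lt|lt|E] := ltngtP K K'; last by exfalso; exact: KK.
- have : K.+1%:R <= K'%:R :> R by rewrite ler_nat.
  rewrite -natr1 => H; clear lt KK; lra.
- have : K'.+1%:R <= K%:R :> R by rewrite ler_nat.
  rewrite -natr1 => H; clear lt KK; lra.
Qed.

Lemma Bx_meas kk bb a1 a2 nn MM K :
  measurable (Bx kk bb a1 a2 nn MM K : set (Rn R d'.+2)).
Proof. by apply: sub_sigma_algebra; eexists; eexists. Qed.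

Lemma box_bdd (a b : 'rV[R]_(d'.+2)) : Defs.bounded_set (box_set a b).
Proof.
exists (\sum_i (`|a 0 i| + `|b 0 i|)) => x Hx i.
have /andP [h1 h2] := Hx i.
apply: (@le_trans _ _ (`|a 0 i| + `|b 0 i|)).
  have := ler_norm (a 0 i); have := ler_norm (- a 0 i); have := ler_norm (b 0 i);
  have := ler_norm (- b 0 i); rewrite !normrN.
  rewrite ler_norml => ? ? ? ?; apply/andP; split; lra.
rewrite (bigD1 i) //= lerDl; apply: sumr_ge0 => *; exact: addr_ge0.
Qed.

Lemma Bx_nu (nu : {measure set (Rn R d'.+2) -> \bar R}) kk bb a1 a2 nn MM K :
  is_lebesgue nu ->
  nu (Bx kk bb a1 a2 nn MM K) = (\prod_(i < d'.+2) Num.max 0 (2 * th_h R nn))%:E.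
Proof.
move=> Hl; rewrite /Bx /gbox Hl; congr (_%:E); apply: eq_bigr => i _.
rewrite !mxE /bfun; congr (Num.max 0 _).
by case: ifP => _; [|case: ifP => _]; ring.
Qed.

End Boxes.
Lemma bern (R : realType) (u : R) (M : nat) : 0 <= u -> 1 + M%:R * u <= (1 + u) ^+ M.
Proof.
move=> u0; elim: M => [|M IH]; first by rewrite mul0r addr0 expr0.
rewrite exprS -natr1 mulrDl mul1r.
have H1 : 0 <= (1 + u) ^+ M by apply: exprn_ge0; lra.
have : (1 + u) * (1 + M%:R * u) <= (1 + u) * (1 + u) ^+ M by apply: ler_wpM2l => //; lra.
have : 0 <= M%:R * u * u by apply: mulr_ge0 => //; apply: mulr_ge0.
nra.
Qed.

Lemma geo_zero (R : realType) (r a : R) : 0 < r -> r < 1 -> (forall M, a <= r ^+ M) -> a <= 0.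
Proof.
move=> r0 r1 H; rewrite leNgt; apply/negP => a0.
pose u := r^-1 - 1.
have u0 : 0 < u by rewrite /u subr_gt0 invf_gt1.
have ru : r * (1 + u) = 1 by rewrite /u addrC subrK mulfV // lt0r_neq0.
have HM : forall M : nat, a * (1 + M%:R * u) <= 1.
  move=> M; apply: (le_trans (ler_wpM2r _ (H M))).
    by apply: addr_ge0 => //; apply: mulr_ge0 => //; exact: ltW.
  apply: (le_trans (ler_wpM2l (exprn_ge0 _ (ltW r0)) (bern M (ltW u0)))).
  by rewrite -exprMn ru expr1n.
pose M := Num.bound ((a * u)^-1).
have au : 0 < a * u by exact: mulr_gt0.
have HB : (a * u)^-1 < M%:R by apply: archi_boundP; rewrite invr_ge0 ltW.
have := HM M.
have : 1 < a * u * M%:R by rewrite -ltr_pdivrMl // mulr1.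
move=> h1 h2. nra.
Qed.
Section Prob.
Variables (R : realType) (d' : nat)
    (nu : {measure set (Rn R d'.+2) -> \bar R}) (rho : R)
    (dO : measure_display) (Om : measurableType dO) (Pr : probability Om R)
    (S : Om -> set 'rV[R]_d'.+2).
Hypotheses (Hleb : is_lebesgue nu) (rho0 : 0 < rho)
    (HP : poisson_point_process Pr nu rho S).

Lemma null_E kk bb a1 a2 nn MM K :
  Pr.-negligible [set w | forall j, S w `&` @Bx R d' kk bb a1 a2 nn MM (K + j) = set0].
Proof.
pose v := \prod_(i < d'.+2) Num.max 0 (2 * th_h R nn).
have v0 : 0 < v.
  apply: prodr_gt0 => i _; rewrite lt_max; apply/orP; right.
  by apply: mulr_gt0 => //; exact: h_pos.
pose r := expR (- (rho * v)).
have r0 : 0 < r by exact: expR_gt0.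
have r1 : r < 1 by rewrite /r expR_lt1 oppr_lt0; exact: mulr_gt0.
pose U (M : nat) (i : 'I_M) : set (Rn R d'.+2) := @Bx R d' kk bb a1 a2 nn MM (K + i).
pose A (M : nat) := [set w | forall i : 'I_M, count_event S (U M i) 0 w].
have HA : forall M, measurable (A M) /\ Pr (A M) = (r ^+ M)%:E.
  move=> M.
  have HU : forall i, measurable (U M i) /\ Defs.bounded_set (U M i).
    by move=> i; split; [exact: Bx_meas| exact: box_bdd].
  have Hd : forall i j, i != j -> U M i `&` U M j = set0.
    move=> i j ij; apply: Bx_disj => /addnI E; move/eqP: ij; apply; exact: val_inj.
  have [mA PA] := HP (fun _ => 0%N) HU Hd.
  split; first exact: mA.
  rewrite PA; congr (_%:E).
  rewrite (eq_bigr (fun _ => r)); first by rewrite prodr_const card_ord.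
  move=> i _; rewrite /U Bx_nu //= /Defs.poisson_prob expr0 fact0 divr1 mul1r.
  by [].
pose Ainf := \bigcap_M A M.
have mAinf : measurable Ainf by apply: bigcapT_measurable => M; case: (HA M).
exists Ainf; split => //.
- apply/eqP; rewrite eq_le measure_ge0 andbT.
  have Hle : forall M, (Pr Ainf <= (r ^+ M)%:E)%E.
    move=> M; have [mAM <-] := HA M.
    by rewrite le_measure ?inE // => w Hw; exact: Hw.
  have Hfin : Pr Ainf = (fine (Pr Ainf))%:E.
    rewrite fineK // ge0_fin_numE ?measure_ge0 //.
    by apply: (le_lt_trans (Hle 0%N)); rewrite expr0 ltry.
  rewrite Hfin lee_fin; apply: (geo_zero r0 r1) => M.
  by rewrite -lee_fin -Hfin.
- move=> w Hw M _ i; rewrite /count_event /U /= (Hw i).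
  by rewrite /Defs.card fset_set0; split => //; exact: finite_set0.
Qed.
End Prob.
Lemma finite_bound (R : realType) n (F : set 'rV[R]_n.+1) :
  finite_set F -> exists T, forall f, F f -> f 0 0 < T.
Proof.
move=> fF; case: (pselect (exists a, F a)) => [[a Fa]|nF].
- have [m Fm Hm] := finite_min (fun f : 'rV[R]_n.+1 => - f 0 0) fF Fa.
  exists (m 0 0 + 1) => f /Hm; rewrite lerN2 => H; lra.
- by exists 0 => f Ff; exfalso; apply: nF; exists f.
Qed.

Lemma dist_from (R : realType) (d' : nat) (P : set 'rV[R]_d'.+2) :
  (forall kk bb a1 a2 nn MM K, exists j z, P z /\ @Bx R d' kk bb a1 a2 nn MM (K + j) z) ->
  Dist (@causal_le R d'.+1) P.
Proof.
move=> nB x y xy F fF.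
have [kk [bb [a1 [a2 [nn [MM H]]]]]] := cover xy.
have [T HT] := finite_bound fF.
set t0 := @th_t0 R d' a1 a2 nn MM.
set m := th_p R a1 a2 nn + 4 * th_h R nn.
pose K := Num.bound `|T - (t0 + (m - th_h R nn))|.
have HK : T - (t0 + (m - th_h R nn)) < K%:R.
  apply: le_lt_trans (ler_norm _) _; exact: archi_boundP.
have [j [z [Pz Bz]]] := nB kk bb a1 a2 nn MM K.
have /andP [tz _] := Bx_time Bz.
have Kj : K%:R <= (K + j)%:R :> R by rewrite ler_nat leq_addr.
have Fz : ~ F z.
  by move=> /HT Hf; move: tz; rewrite -/t0 -/m; clear H HT; lra.
exists z; split => //.
have He : th_e R bb = 1 \/ th_e R bb = -1 by rewrite /th_e; case: odd; [right|left].
have h0 := h_pos R nn.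
have M0 : 0 <= MM%:R :> R by [].
have Ht : `|th_p R a1 a2 nn + 4 * th_h R nn| + th_h R nn + MM%:R +
   Cst d' (th_h R nn) MM%:R / th_h R nn + 1 <= @th_t0 R d' a1 a2 nn MM + (K + j)%:R.
  by rewrite /th_t0 lerDl.
case: H => [[Hx Hy lx ly]|[Hx Hy lx ly]].
- have [l1 l2] := geom He h0 M0 Hx Hy lx ly Ht Bz.
  by move=> E; apply: l2; apply/E.
- have [l1 l2] := geom He h0 M0 Hx Hy lx ly Ht Bz.
  by move=> E; apply: l2; apply/E.
Qed.

Theorem mainTheorem15 (R : realType) (d : nat)
    (nu : {measure set (Rn R d.+1) -> \bar R}) (rho : R)
    (dO : measure_display) (Om : measurableType dO) (Pr : probability Om R)
    (S : Om -> set 'rV[R]_d.+1) :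
  is_lebesgue nu -> 0 < rho ->
  poisson_point_process Pr nu rho S ->
  {ae Pr, forall w, total_lu (@causal_le R d) (S w)}.
Proof.
move=> Hleb rho0 HP.
case: d nu S Hleb HP => [|d'] nu S Hleb HP.
  by apply: aeW => w; apply: total_lu_of => F0 _; exact: finaut_total.
pose E kk bb a1 a2 nn MM K :=
  [set w | forall j, S w `&` @Bx R d' kk bb a1 a2 nn MM (K + j) = set0].
pose Bad := \bigcup_kk \bigcup_bb \bigcup_a1 \bigcup_a2 \bigcup_nn \bigcup_MM
  \bigcup_K E kk bb a1 a2 nn MM K.
have NB : Pr.-negligible Bad.
  do 7 apply: negligible_bigcup => ?.
  exact: (null_E Hleb rho0 HP).
apply: (negligibleS _ NB) => w /= Hw.
apply: contrapT => nB; apply: Hw.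
apply: total_lu_of => F0 fF0; apply: finaut_of_Dist => //.
apply: dist_from => kk bb a1 a2 nn MM K.
apply: contrapT => Hn; apply: nB.
exists kk => //; exists bb => //; exists a1 => //; exists a2 => //; exists nn => //;
  exists MM => //; exists K => // j.
apply/seteqP; split => // z [Sz Bz]; apply: Hn; exists j, z; split => //.
Qed.
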